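(* The transducer $\mathcal O_H$ generates the optimal configurations in the Hanoi Towers Problem. More precisely, for $x,y \in\{0,1,2\}$, $x \neq y$, starting at state $t_{xy}$, and feeding the reversal $m_i(n)^R$ of the length $n$ row $i$ binary Gray code word from $M_n$ into $\mathcal O_H$ produces the reverse of the length $n$ ternary word representing the unique $n$ disk configuration at distance $i$ along the geodesic from $x^n$ to $y^n$ in $\Gamma_n$.
   Context: Let $X_2=\{0,1\}$, $X_3=\{0,1,2\}$. Define matrices $M_n$ of size $2^n \times n$ with entries in $X_2$ by $M_1 = \begin{bmatrix} 0 \\ 1 \end{bmatrix}$, $M_{n+1} = \begin{bmatrix} M_n & 0_n \\ M_n^R & 1_n \end{bmatrix}$, where $M_n^R$ is $M_n$ with the order of rows reversed and $0_n,1_n$ are constant columns of length $2^n$; $m_i(n)$ is row $i$ of $M_n$ (rows indexed from $0$). In the Hanoi Towers Problem on pegs $0,1,2$ with disks $1,\dots,n$, a configuration is encoded by the word $x_1\dots x_n$ over $X_3$, meaning disk $i$ is on peg $x_i$. For $0\le i<j\le 2$ let $a_{ij}$ be the ternary tree automorphism changing the first occurrence of $i$ or $j$ in a word to the other symbol (a move between pegs $i$ and $j$), and let $\Gamma_n$ be the graph whose vertices are the words of length $n$ over $X_3$, with an edge between $w$ and $a_{ij}(w)$ for each $a_{ij}$ (the Schreier graph of the Hanoi Towers group at level $n$). The 2 to 3 transducer $\mathcal O_H$ has six states $t_{xy}$, $x\ne y$ in $X_3$, defined as follows: if $z$ is the third element of $X_3$, then $t_{xy}(0w)=x\,t_{xz}(w)$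 and $t_{xy}(1w)=y\,t_{yz}(w)$, and $t_{xy}(\emptyset)=\emptyset$. *)

(* Defs.v *)
From mathcomp Require Import all_boot.
Set Implicit Arguments. Unset Strict Implicit. Unset Printing Implicit Defensive.

(* X_2 = bool (0 = false, 1 = true); X_3 = 'I_3 *)

Fixpoint grayM (n : nat) : seq (seq bool) :=
  match n with
  | 0 => [:: [::]]
  | m.+1 => [seq rcons r false | r <- grayM m] ++ [seq rcons r true | r <- rev (grayM m)]
  end.

Definition grayRow (n i : nat) : seq bool := nth [::] (grayM n) i.

Fixpoint hanoi_a (i j : 'I_3) (w : seq 'I_3) : seq 'I_3 :=
  match w with
  | [::] => [::]
  | c :: w' => if c == i then j :: w' else if c == j then i :: w' else c :: hanoi_a i j w'
  end.

Definition hanoi_adj : rel (seq 'I_3) :=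
  fun w v => [exists i : 'I_3, exists j : 'I_3, (i < j) && (v == hanoi_a i j w)].

(* p is a path from a to b: vertex list a :: p, of length size p *)
Definition is_path (a b : seq 'I_3) (p : seq (seq 'I_3)) : Prop :=
  path hanoi_adj a p /\ last a p = b.

Definition geodesic (a b : seq 'I_3) (p : seq (seq 'I_3)) : Prop :=
  is_path a b p /\ forall q, is_path a b q -> size p <= size q.

(* for x != y in {0,1,2}, 3 - x - y is the remaining element *)
Definition third (x y : 'I_3) : 'I_3 :=
  @Ordinal 3 ((3 - x - y) %% 3) (ltn_pmod _ (isT : 0 < 3)).

Fixpoint transduce (x y : 'I_3) (w : seq bool) : seq 'I_3 :=
  match w with
  | [::] => [::]
  | b :: w' => if b then y :: transduce y (third x y) w'
                    else x :: transduce x (third x y) w'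
  end.

(* Main.v *)
Require Import Defs.
From mathcomp Require Import all_boot zify.

Definition sw (i j c : 'I_3) : 'I_3 := if c == i then j else if c == j then i else c.
Definition hij (i j : 'I_3) (u : seq 'I_3) := has (fun c => (c == i) || (c == j)) u.

Lemma F4 (i j c a : 'I_3) :
  (i != j) -> (sw i j c != c) -> (a != i) -> (a != j) -> (a = third c (sw i j c)).
Proof.
case: i => [[|[|[|?]]] Hi] //; case: j => [[|[|[|?]]] Hj] //; case: c => [[|[|[|?]]] Hc] //;
case: a => [[|[|[|?]]] Ha] //; rewrite /sw /third /=; try (by move=> *; apply/val_inj).
Qed.

Lemma F1 {x y : 'I_3} : x != y -> (third x y != x) && (third x y != y).
Proof.
case: x => [[|[|[|?]]] Hx] //; case: y => [[|[|[|?]]] Hy] //.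
Qed.

Lemma F3 (x y : 'I_3) : third x y = third y x.
Proof.
case: x => [[|[|[|?]]] Hx] //; case: y => [[|[|[|?]]] Hy] //; by apply/val_inj.
Qed.

Lemma ha_rcons i j u c : hanoi_a i j (rcons u c) =
  if hij i j u then rcons (hanoi_a i j u) c else rcons u (sw i j c).
Proof.
elim: u => [|a u IH] /=; first by rewrite /sw; case: ifP => //; case: ifP.
rewrite /hij /=. case: ifP => Hi /=; first by [].
case: ifP => Hj /=; first by [].
by rewrite IH /hij; case: ifP.
Qed.

Lemma ha_size i j u : size (hanoi_a i j u) = size u.
Proof. elim: u => //= a u IH; case: ifP => //; case: ifP => //= _ _; by rewrite IH. Qed.

Lemma ha_inv i j u : i != j -> hanoi_a i j (hanoi_a i j u) = u.
Proof.
move=> ij; elim: u => //= a u IH.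
case: (eqVneq a i) => [->|ai] /=; first by rewrite (eq_sym j i) (negbTE ij) ?eqxx.
case: (eqVneq a j) => [->|aj] /=; first by rewrite eqxx.
by rewrite (negbTE ai) (negbTE aj) IH.
Qed.

Lemma ha_sym i j u : hanoi_a i j u = hanoi_a j i u.
Proof.
case: (eqVneq i j) => [->//|ij]. elim: u => //= a u IH.
case: (eqVneq a i) => [->|ai] /=; first by rewrite (negbTE ij).
by rewrite IH.
Qed.

Definition Rr : rel (seq 'I_3) := fun u v => hanoi_adj u v || (u == v).

Lemma adj_sym u v : hanoi_adj u v -> hanoi_adj v u.
Proof.
move=> /existsP[i /existsP[j /andP[ij /eqP ->]]].
apply/existsP; exists i; apply/existsP; exists j; rewrite ij ha_inv ?eqxx //.
by apply/eqP => e; move: ij; rewrite e ltnn.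
Qed.

Lemma Rr_sym u v : Rr u v -> Rr v u.
Proof. by case/orP => [/adj_sym h| /eqP ->]; rewrite /Rr ?h ?eqxx ?orbT. Qed.

Lemma Rr_size u v : Rr u v -> size v = size u.
Proof.
by case/orP => [/existsP[i /existsP[j /andP[_ /eqP ->]]]|/eqP ->]; rewrite ?ha_size.
Qed.

Definition gmove : rel (seq 'I_3) := fun u v =>
  [exists i : 'I_3, exists j : 'I_3, (i != j) && hij i j u && (v == hanoi_a i j u)].

Lemma gmove_adj u v : gmove u v -> hanoi_adj u v.
Proof.
move=> /existsP[i /existsP[j /andP[/andP[ij _] /eqP ->]]].
case: (ltngtP i j) => [lt|gt|eq].
- by apply/existsP; exists i; apply/existsP; exists j; rewrite lt eqxx.
- by apply/existsP; exists j; apply/existsP; exists i; rewrite gt ha_sym eqxx.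
- by move: ij; rewrite (val_inj eq) eqxx.
Qed.

Lemma gmove_rcons u v c : gmove u v -> gmove (rcons u c) (rcons v c).
Proof.
move=> /existsP[i /existsP[j /andP[/andP[ij h] /eqP ->]]].
apply/existsP; exists i; apply/existsP; exists j.
by rewrite ij ha_rcons h /hij has_rcons; move: h; rewrite /hij => ->; rewrite orbT eqxx.
Qed.

Lemma path_rcons_map a s c : path gmove a s -> path gmove (rcons a c) (map (rcons^~ c) s).
Proof.
elim: s a => //= b s IH a /andP[h1 h2]; by rewrite gmove_rcons // IH.
Qed.

Lemma nseq_rcons n (x : 'I_3) : rcons (nseq n x) x = nseq n.+1 x.
Proof. by elim: n => //= n ->. Qed.

Lemma hij_nseq i j n (z : 'I_3) : z != i -> z != j -> hij i j (nseq n z) = false.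
Proof. move=> zi zj; elim: n => //= n ->; by rewrite (negbTE zi) (negbTE zj). Qed.

Lemma gmove_mid n (x y : 'I_3) : x != y ->
  gmove (rcons (nseq n (third x y)) x) (rcons (nseq n (third x y)) y).
Proof.
move=> xy; case/andP: (F1 xy) => zx zy.
apply/existsP; exists x; apply/existsP; exists y.
rewrite xy /hij has_rcons eqxx /= ha_rcons hij_nseq // /sw eqxx //.
Qed.

Fixpoint Vs (n : nat) (x y : 'I_3) : seq (seq 'I_3) :=
  match n with
  | 0 => [:: [::]]
  | m.+1 => [seq rcons w x | w <- Vs m x (third x y)] ++ [seq rcons w y | w <- Vs m (third x y) y]
  end.

Lemma size_Vs n x y : size (Vs n x y) = 2 ^ n.
Proof. elim: n x y => //= n IH x y; rewrite size_cat !size_map !IH expnS; lia. Qed.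

Lemma Vs_rev n x y : Vs n x y = rev (Vs n y x).
Proof.
elim: n x y => //= n IH x y; rewrite rev_cat -!map_rev -!IH F3 //.
Qed.

Lemma Vs_shape n x y : x != y -> exists s, [/\ Vs n x y = nseq n x :: s,
  last (nseq n x) s = nseq n y & path gmove (nseq n x) s].
Proof.
elim: n x y => [|n IH] x y xy; first by exists [::].
case/andP: (F1 xy) => zx zy.
have xz : x != third x y by rewrite eq_sym.
have [s1 [e1 l1 p1]] := IH x _ xz.
have [s2 [e2 l2 p2]] := IH _ y zy.
exists (map (rcons^~ x) s1 ++ map (rcons^~ y) (nseq n (third x y) :: s2)).
rewrite /= e1 e2 /= nseq_rcons; split => //.
- by rewrite last_cat /= (last_map (rcons^~ y)) l2 nseq_rcons.
- rewrite -[x :: nseq n x]/(nseq n.+1 x) -nseq_rcons.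
  rewrite cat_path path_rcons_map //= (last_map (rcons^~ x)) l1 gmove_mid //.
  exact: path_rcons_map.
Qed.

Lemma size_gray n : size (grayM n) = 2 ^ n.
Proof. elim: n => //= n IH; rewrite size_cat !size_map size_rev IH expnS; lia. Qed.

Lemma trans_Vs n x y i : i < 2 ^ n ->
  transduce x y (rev (grayRow n i)) = rev (nth [::] (Vs n x y) i).
Proof.
elim: n x y i => [|n IH] x y i hi.
- by case: i hi.
- rewrite /grayRow /= !nth_cat !size_map size_gray size_Vs.
  case: ifP => hlt.
  + rewrite (nth_map [::]) ?size_gray // (nth_map [::]) ?size_Vs // rev_rcons /=.
    by rewrite -/(grayRow n i) IH // rev_rcons.
  + have hk : i - 2 ^ n < 2 ^ n by move: hi hlt; rewrite expnS; lia.
    rewrite (nth_map [::]) ?size_rev ?size_gray // (nth_map [::]) ?size_Vs //.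
    rewrite nth_rev ?size_gray // rev_rcons /= -/(grayRow n _) IH; last lia.
    by rewrite rev_rcons [Vs n (third x y) y]Vs_rev nth_rev size_Vs.
Qed.

Definition lastl (w : seq 'I_3) := last ord0 w.

Lemma decomp n w : size w = n.+1 -> w = rcons (take n w) (lastl w).
Proof.
case/lastP: w => [|w c] //; rewrite size_rcons => -[hs].
by rewrite /lastl last_rcons -cats1 (take_size_cat _ hs) cats1.
Qed.

Lemma R_proj' u' v' c c' : Rr (rcons u' c) (rcons v' c') -> c = c' -> Rr u' v'.
Proof.
move=> r e; subst c'; case/orP: r => [/existsP[i /existsP[j /andP[ij /eqP e]]]|/eqP /rcons_inj [eu]];
  last by rewrite eu /Rr eqxx orbT.
move: e; rewrite ha_rcons; case: ifP => h /rcons_inj => -[e]; try move=> _.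
- by apply/orP; left; apply/existsP; exists i; apply/existsP; exists j; rewrite ij e eqxx.
- by rewrite /Rr e eqxx orbT.
Qed.

Lemma R_trans u' v' c c' : Rr (rcons u' c) (rcons v' c') -> c != c' ->
  u' = nseq (size u') (third c c') /\ v' = u'.
Proof.
case/orP => [/existsP[i /existsP[j /andP[ij /eqP e]]]|/eqP /rcons_inj [_ ec]];
  last by rewrite ec eqxx.
move: e; rewrite ha_rcons; case: ifP => h /rcons_inj [e1 e2] cc.
- by move: cc; rewrite e2 eqxx.
- have ineqj : i != j by apply/eqP => E; move: ij; rewrite E ltnn.
  split=> //; apply/all_pred1P/allP => a ha /=.
  have: ~~ ((a == i) || (a == j)) by apply: contraFN h => H; apply/hasP; exists a.
  rewrite negb_or => /andP[ai aj]; rewrite e2; apply/eqP; apply: F4 => //.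
  by rewrite -e2 eq_sym.
Qed.

Lemma path_size a p : path Rr a p -> all (fun w => size w == size a) p.
Proof.
elim: p a => //= b p IH a /andP[r h]; rewrite (Rr_size _ _ r) eqxx /=.
by move: (IH _ h); rewrite (Rr_size _ _ r).
Qed.

Lemma proj n c a p : path Rr a p ->
  all (fun w => (size w == n.+1) && (lastl w == c)) (a :: p) ->
  path Rr (take n a) (map (take n) p).
Proof.
elim: p a => //= b p IH a /andP[r h] /and3P[/andP[sa la] /andP[sb lb] hall].
rewrite IH ?h //=; last by rewrite sb lb.
rewrite andbT; rewrite (decomp n a (eqP sa)) (decomp n b (eqP sb)) in r.
by apply: R_proj' r _; rewrite (eqP la) (eqP lb).
Qed.

Lemma split_first T (P : pred T) s : has (predC P) s ->
  exists s1 v s2, [/\ s = s1 ++ v :: s2, all P s1 & ~~ P v].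
Proof.
elim: s => //= a s IH; case: (boolP (P a)) => pa /=.
- move=> /IH [s1 [v [s2 [-> h1 h2]]]]; by exists (a :: s1), v, s2; rewrite /= pa h1.
- by move=> _; exists [::], a, s.
Qed.

Lemma lastl_nseq n x : lastl (nseq n.+1 x) = x.
Proof. by rewrite -nseq_rcons /lastl last_rcons. Qed.

Lemma First n x p : path Rr (nseq n.+1 x) p -> has (fun w => lastl w != x) p ->
  exists p1 v p2, [/\ p = p1 ++ v :: p2, all (fun w => lastl w == x) p1, lastl v != x,
     take n v = nseq n (third x (lastl v)) & path Rr (nseq n x) (map (take n) p1)
   /\ last (nseq n x) (map (take n) p1) = nseq n (third x (lastl v))].
Proof.
move=> hp hh.
have hs := path_size _ _ hp; rewrite size_nseq in hs.
have [p1 [v [p2 [ep a1 nv]]]] := @split_first _ (fun w => lastl w == x) p hh.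
move: hp hs; rewrite ep cat_path /= => /and3P[hp1 r hp2].
rewrite all_cat /= => /and3P[hs1 sv hs2].
set u := last (nseq n.+1 x) p1.
have hall : all (fun w => (size w == n.+1) && (lastl w == x)) (nseq n.+1 x :: p1).
  rewrite /= size_nseq lastl_nseq !eqxx /=; apply/allP => w hw.
  by rewrite (allP hs1 _ hw) (allP a1 _ hw).
have /andP[su lu] := allP hall u (mem_last _ _).
have {}r : Rr u v := r.
rewrite {1}(decomp n u (eqP su)) {1}(decomp n v (eqP sv)) (eqP lu) in r.
have xv : x != lastl v by rewrite eq_sym.
have [e1 e2] := R_trans _ _ _ _ r xv.
have e1' : take n u = nseq n (third x (lastl v)) by rewrite {1}e1 size_takel ?(eqP su).
exists p1, v, p2; split => //; first by rewrite e2.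
split.
- rewrite -(@take_nseq _ n n.+1 x (leqnSn n)); exact: (proj n x).
- by rewrite -(@take_nseq _ n n.+1 x (leqnSn n)) last_map -/u e1'.
Qed.

Lemma count2 T (a b : pred T) s : (forall w, a w -> ~~ b w) ->
  count a s + count b s <= size s.
Proof.
move=> H; elim: s => //= w s IH.
case aw: (a w); case bw: (b w) => /=; try lia.
by move: (H w); rewrite aw bw; move/(_ isT).
Qed.

Lemma has_last a p d : lastl (last a p) != d -> lastl a == d ->
  has (fun w => lastl w != d) p.
Proof.
case: p => [|b p]; first by rewrite /= => /negbTE ->.
move=> h _; apply/hasP; exists (last b p); [exact: mem_last | exact: h].
Qed.

Lemma count_all_eq (P : pred (seq 'I_3)) s : all P s -> count P s = size s.
Proof. by rewrite all_count => /eqP. Qed.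

Lemma ar1 N p1 cX cY S : N <= p1.+1 -> p1 < cX -> N <= cY -> cX + cY <= S.+1 -> 2 * N <= S.+1.
Proof. lia. Qed.

Lemma ar2 N p1 p2 cX cY cv : N <= p1.+1 -> p1 < cX -> N <= cY -> cX + cY <= (p1 + p2.+1).+1 ->
  (p1 + p2.+1).+1 = 2 * N -> cY = cv -> cv <= p2.+1 -> [/\ p1.+1 = N, p2.+1 = N & cv = p2.+1].
Proof. move=> *; split; lia. Qed.

Lemma lower n : forall x y, x != y -> forall p, path Rr (nseq n x) p ->
  last (nseq n x) p = nseq n y ->
  2 ^ n <= (size p).+1 /\ ((size p).+1 = 2 ^ n -> nseq n x :: p = Vs n x y).
Proof.
elim: n => [|n IH] x y xy p hp hl.
  by split=> // hs; case: p hp hl hs.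
have hs := path_size _ _ hp; rewrite size_nseq in hs.
have hh : has (fun w => lastl w != x) p.
  by apply: (has_last (nseq n.+1 x)); rewrite ?hl !lastl_nseq // eq_sym.
have [p1 [v [p2 [ep a1 nv tv [pp1 lp1]]]]] := First _ _ _ hp hh.
have xv : x != lastl v by rewrite eq_sym.
have /andP[tx tv'] := F1 xv.
have xt : x != third x (lastl v) by rewrite eq_sym.
have [b1 u1] := IH x _ xt _ pp1 lp1.
rewrite size_map in b1 u1.
set V := nseq n.+1 x :: p.
have cnt1 : count (fun w => lastl w == x) p1 = size p1 by apply: count_all_eq.
have cx : (size p1).+1 <= count (fun w => lastl w == x) V.
  by rewrite /V ep /= count_cat lastl_nseq eqxx cnt1 /= add1n ltnS leq_addr.
set p' := rev (belast (nseq n.+1 x) p).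
have hp' : path Rr (nseq n.+1 y) p'.
  rewrite -hl /p' rev_path; apply: sub_path hp => a b; exact: Rr_sym.
have eV : nseq n.+1 y :: p' = rev V by rewrite /V [in RHS]lastI hl rev_rcons.
have hl' : last (nseq n.+1 y) p' = nseq n.+1 x.
  by rewrite -[last _ p']/(last [::] (nseq n.+1 y :: p')) eV /V rev_cons last_rcons.
have hh' : has (fun w => lastl w != y) p'.
  by apply: (has_last (nseq n.+1 y)); rewrite ?hl' !lastl_nseq // eq_sym.
have [q1 [w [q2 [eq' b1' nw _ [pq1 lq1]]]]] := First _ _ _ hp' hh'.
have yw : y != lastl w by rewrite eq_sym.
have /andP[ty _] := F1 yw.
have yt : y != third y (lastl w) by rewrite eq_sym.
have [bq _] := IH y _ yt _ pq1 lq1.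
rewrite size_map in bq.
have cnt2 : count (fun w => lastl w == y) q1 = size q1 by apply: count_all_eq.
have cy : 2 ^ n <= count (fun w => lastl w == y) V.
  rewrite -count_rev -eV eq' /= count_cat lastl_nseq eqxx cnt2 /= add1n.
  by apply: leq_trans bq _; rewrite ltnS leq_addr.
have c2 : count (fun w => lastl w == x) V + count (fun w => lastl w == y) V <= size V.
  by apply: count2 => w0 /eqP ->; rewrite xy.
have sV : size V = (size p).+1 by [].
have ep_size : size p = size p1 + (size p2).+1 by rewrite ep size_cat.
rewrite expnS.
split; first by apply: (ar1 _ _ _ _ _ b1 cx cy); rewrite -sV.
move=> hsz.
have c0 : count (fun w => lastl w == y) p1 = 0.
  have := @count2 _ (fun w => lastl w == x) (fun w => lastl w == y) p1.
  rewrite cnt1 -{2}[size p1]addn0 leq_add2l leqn0 => /(_ _)/eqP; apply.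
  by move=> w0 /eqP ->.
have cyV : count (fun w => lastl w == y) V = count (fun w => lastl w == y) (v :: p2).
  by rewrite /V ep [LHS]/= count_cat c0 lastl_nseq (negbTE xy).
have cyle := count_size (fun w => lastl w == y) (v :: p2).
rewrite sV ep_size in c2 hsz.
have [e1 e2 e3] := ar2 _ _ _ _ _ _ b1 cx cy c2 hsz cyV cyle.
have allv : all (fun w => lastl w == y) (v :: p2) by rewrite all_count e3.
have /andP[/eqP lv allp2] := allv.
have E1 := u1 e1.
move: hp hs; rewrite ep cat_path all_cat => /andP[_ hpv] /andP[hs1 hs2'].
have /andP[sv hs2] := hs2'.
have hall2 : all (fun w => (size w == n.+1) && (lastl w == y)) (v :: p2).
  by apply/allP => w0 hw0; rewrite (allP hs2' _ hw0) (allP allv _ hw0).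
have hpv' : path Rr v p2 by move: hpv => /andP[].
have pp2 := proj n y v p2 hpv' hall2.
have lp2 : last (take n v) (map (take n) p2) = nseq n y.
  rewrite last_map.
  have -> : last v p2 = nseq n.+1 y by rewrite -hl ep last_cat.
  exact: take_nseq.
rewrite lv in E1 tv.
rewrite tv in pp2 lp2.
have /andP[_ ty2] := F1 xy.
have [_ u2] := IH _ _ ty2 _ pp2 lp2.
rewrite size_map in u2.
have E2 := u2 e2.
rewrite /V /= -E1 -E2 /= nseq_rcons -!map_comp ep.
congr (_ :: _ ++ _ :: _).
- apply/esym/map_id_in => w0 hw0 /=.
  have sz := eqP (allP hs1 _ hw0); have lw := eqP (allP a1 _ hw0).
  by rewrite {2}(decomp n w0 sz) lw.
- by rewrite -tv -lv -(decomp n v (eqP sv)).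
- apply/esym/map_id_in => w0 hw0 /=.
  have sz := eqP (allP hs2 _ hw0); have lw := eqP (allP allp2 _ hw0).
  by rewrite {2}(decomp n w0 sz) lw.
Qed.


Theorem mainTheorem12 (n : nat) (x y : 'I_3) :
  0 < n -> x != y ->
  (exists p, geodesic (nseq n x) (nseq n y) p) /\
  forall p, geodesic (nseq n x) (nseq n y) p ->
  forall i, i < 2 ^ n ->
    i <= size p /\
    transduce x y (rev (grayRow n i)) = rev (nth [::] (nseq n x :: p) i).
Proof.
move=> _ xy.
have [s [es ls ps]] := Vs_shape n x y xy.
have ss : (size s).+1 = 2 ^ n by rewrite -(size_Vs n x y) es.
have lb : forall q, is_path (nseq n x) (nseq n y) q -> 2 ^ n <= (size q).+1 /\
    ((size q).+1 = 2 ^ n -> nseq n x :: q = Vs n x y).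
  move=> q [hq lq]; apply: (lower n x y xy q) lq.
  by apply: sub_path hq => a b h; rewrite /Rr h.
have ips : is_path (nseq n x) (nseq n y) s.
  by split => //; apply: sub_path ps => a b; exact: gmove_adj.
have geo : geodesic (nseq n x) (nseq n y) s.
  by split => // q /lb [h _]; rewrite -ltnS ss.
split; first by exists s.
move=> p [pp hmin] i hi.
have [h1 h2] := lb p pp.
have hsp : (size p).+1 = 2 ^ n.
  by apply/eqP; rewrite eqn_leq h1 andbT -ss ltnS hmin.
split; first by rewrite -ltnS hsp.
by rewrite (h2 hsp) trans_Vs.
Qed.
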